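(* Let $M, K, P, N$ be positive integers with $1 < M \le K \le P$. Then there exists a matrix $\mathbf{A} \in \mathbb{R}^{M \times N}$ such that every matrix $\mathbf{F} \in \mathbb{R}^{P \times N}$ with the property that, for every set $\chi \subseteq \{1,\ldots,P\}$ with $|\chi| = K$, the rows of $\mathbf{F}$ indexed by $\chi$ span all the rows of $\mathbf{A}$, has average row sparsity satisfying $$\bar{s} > \frac{N}{P}(P-K+M) - \frac{M^2}{P}\binom{P}{K-M+1}.$$ Moreover, if $N$ is sufficiently large that $M^2\binom{P}{K-M+1} = o(N)$, then $$\bar{s} > \frac{N}{P}(P-K+M) - o\!\left(\frac{N}{P}\right).$$
   Context: The sparsity of a vector is its number of nonzero entries; $\bar{s} = \frac{1}{P}\sum_{i=1}^P \|\mathbf{f}_i\|_0$, where $\mathbf{f}_i^T$ is the $i$-th row of $\mathbf{F}$ and $\|\cdot\|_0$ counts nonzero entries. *)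

(* Defs.v *)
From mathcomp Require Import all_boot all_order all_algebra.
From mathcomp Require Import reals.
Set Implicit Arguments. Unset Strict Implicit. Unset Printing Implicit Defensive.
Import Order.TTheory GRing.Theory Num.Theory.
Local Open Scope ring_scope.

Definition row_sparsity (R : realType) (P N : nat) (F : 'M[R]_(P, N)) (i : 'I_P) : nat :=
  #|[set j : 'I_N | F i j != 0]|.

Definition avg_sparsity (R : realType) (P N : nat) (F : 'M[R]_(P, N)) : R :=
  (\sum_(i < P) row_sparsity F i)%:R / P%:R.

Definition rows_span (R : realType) (M P N : nat) (F : 'M[R]_(P, N)) (chi : {set 'I_P})
  (A : 'M[R]_(M, N)) : Prop :=
  (A <= (\sum_(i in chi) <<row i F>>)%MS)%MS.

Definition K_robust (R : realType) (M K P N : nat) (F : 'M[R]_(P, N)) (A : 'M[R]_(M, N)) : Prop :=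
  forall chi : {set 'I_P}, #|chi| = K -> rows_span F chi A.

Definition tends_to0 (R : realType) (e : nat -> R) : Prop :=
  forall eps : R, 0 < eps -> exists n0 : nat, forall n, (n0 <= n)%N -> `|e n| < eps.

(* Main.v *)
Require Import Defs.
From mathcomp Require Import all_boot all_order all_algebra.
From mathcomp Require Import reals.
From mathcomp Require Import zify ring.
Import Order.TTheory GRing.Theory Num.Theory.
Set Implicit Arguments. Unset Strict Implicit. Unset Printing Implicit Defensive.
Local Open Scope ring_scope.

Lemma ext_set (T : finType) (E D : {set T}) k :
  E \subset D -> (#|E| <= k)%N -> (k <= #|D|)%N ->
  exists chi : {set T}, [/\ E \subset chi, chi \subset D & #|chi| = k].
Proof.
move=> sED hE hD.
have [d hd] : exists d, d = (k - #|E|)%N by eexists.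
elim: d E sED hE hd => [|d IH] E sED hE hd.
  by exists E; split => //; lia.
have : E \proper D by rewrite properEcard sED; lia.
case/properP => _ [x xD xE].
have [chi [h1 h2 h3]] : exists chi : {set T}, [/\ x |: E \subset chi, chi \subset D & #|chi| = k].
  apply: IH; first by rewrite subUset sub1set xD sED.
  - by rewrite cardsU1 xE; lia.
  - by rewrite cardsU1 xE; lia.
exists chi; split => //; apply: subset_trans h1; exact: subsetUr.
Qed.

Lemma my_card_sum (T : finType) (p : pred T) :
  #|[set x | p x]| = (\sum_x (p x : nat))%N.
Proof.
rewrite -sum1_card big_mkcond /=; apply: eq_bigr => x _; rewrite inE.
by case: (p x).
Qed.

Section R.
Variable R : realType.

Lemma rank_sum_le (I : finType) (P : pred I) n (B : I -> 'M[R]_n) :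
  (\rank (\sum_(i | P i) B i)%MS <= \sum_(i | P i) \rank (B i))%N.
Proof.
elim/big_rec2: _ => [|i y1 y2 _ h]; first by rewrite mxrank0.
apply: leq_trans (mxrank_adds_leqif _ _) _; exact: leq_add.
Qed.

Definition Vmx M N : 'M[R]_(M, N) := \matrix_(i, j) ((val j).+1%:R) ^+ i.
Definition selmx N (D : {set 'I_N}) : 'M[R]_(N, #|D|) :=
  \matrix_(j, k) ((j == enum_val k)%:R).

Lemma sel_entry m N (B : 'M[R]_(m, N)) D i k :
  (B *m selmx D) i k = B i (enum_val k).
Proof.
rewrite !mxE (bigD1 (enum_val k)) //= mxE eqxx mulr1 big1 ?addr0 // => j /negPf hj.
by rewrite mxE hj mulr0.
Qed.

Lemma rank_lemma M P N (F : 'M[R]_(P, N)) (A : 'M[R]_(M, N)) chi m (S : 'M[R]_(N, m)) :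
  rows_span F chi A ->
  (\rank (A *m S) <= #|[set i in chi | row i F *m S != 0%R]|)%N.
Proof.
move=> h; have h1 := submxMr S h.
have h2 : (A *m S <= \sum_(i in chi) <<row i F *m S>>)%MS.
  apply: submx_trans h1 _; rewrite sumsmxMr_gen; apply/sumsmxS => i _.
  by rewrite !genmxE (eqmxMr _ (genmxE _)).
apply: leq_trans (mxrankS h2) _; apply: leq_trans (rank_sum_le _ _) _.
rewrite -sum1_card big_mkcond [X in (_ <= X)%N]big_mkcond /=.
apply: leq_sum => i _; rewrite inE genmxE rank_rV.
by case: (i \in chi); case: (_ != 0).
Qed.

Lemma vander_free M N (D : {set 'I_N}) :
  (M <= #|D|)%N -> row_free (Vmx M N *m selmx D).
Proof.
case: M => [|M] hMD; first by rewrite -kermx_eq0 thinmx0.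
rewrite -kermx_eq0; apply/eqP/row_matrixP => r; rewrite row0.
set v := row r _.
have hv : v *m (Vmx M.+1 N *m selmx D) = 0 by apply/sub_kermxP; rewrite row_sub.
pose p := \poly_(i < M.+1) v 0 (inord i).
have p0 : p = 0.
  apply: (@roots_geq_poly_eq0 _ _ [seq ((val (enum_val k)).+1%:R : R) | k <- enum 'I_#|D|]).
  - apply/allP => x /mapP[k _ ->]; rewrite /root horner_poly.
    have := congr1 (fun X : 'rV[R]_#|D| => X 0 k) hv; rewrite !mxE => h.
    apply/eqP; rewrite -[in RHS]h; apply: eq_bigr => i _; rewrite sel_entry mxE inord_val.
    by rewrite /v !mxE.
  - rewrite (map_inj_uniq (f := fun k : 'I_#|D| => ((val (enum_val k)).+1%:R : R))) ?enum_uniq // => k1 k2 /eqP; rewrite eqr_nat eqSS.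
    by move/eqP/val_inj/enum_val_inj.
  - rewrite size_map size_enum_ord; apply: leq_trans (size_poly _ _) hMD.
apply/rowP => i; rewrite [RHS]mxE; have := coef_poly M.+1 (fun i => v 0 (inord i)) i.
by rewrite -/p p0 coef0 ltn_ord inord_val => h; rewrite -h.
Qed.

Lemma vander_ne0 M N (D : {set 'I_N}) :
  (0 < M)%N -> (0 < #|D|)%N -> \rank (Vmx M N *m selmx D) != 0%N.
Proof.
move=> hM hD; rewrite mxrank_eq0; apply/eqP => /matrixP /(_ (Ordinal hM) (Ordinal hD)).
by rewrite sel_entry !mxE expr0 => /eqP; rewrite oner_eq0.
Qed.


End R.
Section R2.
Variable R : realType.

Lemma main_nat M K P N (F : 'M[R]_(P, N)) :
  (1 < M)%N -> (M <= K)%N -> (K <= P)%N -> K_robust K F (Vmx R M N) ->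
  (N * (P - K + M) < \sum_i row_sparsity F i + M ^ 2 * 'C(P, K - M + 1))%N.
Proof.
move=> hM hMK hKP rob.
pose Z (j : 'I_N) := [set i : 'I_P | F i j == 0].
have hsum : (\sum_i row_sparsity F i = \sum_j (P - #|Z j|))%N.
  rewrite /row_sparsity.
  under eq_bigr => i _ do rewrite (my_card_sum (fun j => F i j != 0)).
  rewrite exchange_big /=; apply: eq_bigr => j _.
  have hc := cardsC (Z j); rewrite card_ord in hc.
  transitivity (#|Z j| + #|~: Z j| - #|Z j|)%N; last by rewrite hc.
  have -> : ~: Z j = [set i | F i j != 0] by apply/setP => i; rewrite !inE.
  by rewrite addKn (my_card_sum (fun i => F i j != 0)).
have key : forall (T : {set 'I_P}) (D : {set 'I_N}),
    (#|T| <= K)%N -> (forall j, j \in D -> T \subset Z j) ->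
    (\rank (Vmx R M N *m selmx R D) <= K - #|T|)%N.
  move=> T D hT hTD.
  have hKP' : (K <= #|[set: 'I_P]|)%N by rewrite cardsT card_ord.
  have [chi [h1 h2 h3]] := ext_set (subsetT T) hT hKP'.
  apply: leq_trans (rank_lemma _ (rob chi h3)) _.
  have -> : (K - #|T| = #|chi :\: T|)%N.
    by rewrite cardsD (setIidPr h1) h3.
  apply: subset_leq_card; apply/subsetP => i; rewrite !inE => /andP[ic ne].
  rewrite ic andbT; apply: contra ne => iT; apply/eqP/rowP => k.
  rewrite sel_entry !mxE.
  have := subsetP (hTD _ (enum_valP k)) i iT; rewrite inE => /eqP ->.
  by [].
have hM0 : (0 < M)%N by lia.
have claim1 : forall j, (#|Z j| < K)%N.
  move=> j; rewrite ltnNge; apply/negP => hZ.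
  have h0 : (#|(set0 : {set 'I_P})| <= K)%N by rewrite cards0.
  have [T [_ hTZ hT]] := ext_set (sub0set (Z j)) h0 hZ.
  have hTK : (#|T| <= K)%N by rewrite hT.
  have := key T [set j] hTK (fun j' hj' => etrans (congr1 (fun x => T \subset Z x) (set1P hj')) hTZ).
  rewrite hT subnn leqn0; apply/negP; apply: vander_ne0 => //.
  by rewrite cards1.
pose t := (K - M + 1)%N.
pose B := [set j | (t <= #|Z j|)%N].
pose Tof j := odflt set0 [pick T : {set 'I_P} | (T \subset Z j) && (#|T| == t)].
have hTof : forall j, j \in B -> Tof j \subset Z j /\ #|Tof j| = t.
  move=> j; rewrite inE => hj; rewrite /Tof; case: pickP => [T /andP[a /eqP b] | none] //=.
  have h0 : (#|(set0 : {set 'I_P})| <= t)%N by rewrite cards0.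
  have [T [_ a b]] := ext_set (sub0set (Z j)) h0 hj.
  by have := none T; rewrite a b eqxx.
have fiber : forall T : {set 'I_P}, #|T| = t -> (#|[set j in B | Tof j == T]| <= M - 1)%N.
  move=> T hT; rewrite leqNgt; apply/negP => hD.
  have htK : (#|T| <= K)%N by rewrite hT /t; lia.
  have hsub : forall j, j \in [set j in B | Tof j == T] -> T \subset Z j.
    move=> j; rewrite inE => /andP[jB /eqP <-]; by case: (hTof j jB).
  have := key T _ htK hsub.
  have hMD : (M <= #|[set j in B | Tof j == T]|)%N by lia.
  by rewrite (eqP (vander_free R hMD)) hT /t; lia.
have hB : (#|B| <= 'C(P, t) * (M - 1))%N.
  rewrite -sum1_card (partition_big Tof (fun T => #|T| == t)) /=; last first.
    by move=> j /hTof[_ ->].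
  apply: (@leq_trans (\sum_(T : {set 'I_P} | #|T| == t) (M - 1))%N).
    apply: leq_sum => T /eqP hT.
    rewrite (eq_bigl (fun j => j \in [set j in B | Tof j == T])) ?sum1_card ?fiber // => j.
    by rewrite inE.
  rewrite (eq_bigl (fun T => T \in [set T : {set 'I_P} | #|T| == t])) => [|T]; last by rewrite inE.
  by rewrite sum_nat_const card_draws card_ord.
have hcol : (N * (P - K + M) <= \sum_j (P - #|Z j|) + #|B| * (M - 1))%N.
  have -> : (#|B| * (M - 1) = \sum_j (if j \in B then M - 1 else 0))%N.
    by rewrite -sum_nat_const big_mkcond.
  rewrite -big_split /=.
  have -> : (N * (P - K + M) = \sum_(j < N) (P - K + M))%N.
    by rewrite big_const_ord iter_addn_0 mulnC.
  apply: leq_sum => j _; have := claim1 j; rewrite inE.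
  have := card_ord P; have : (#|Z j| <= #|'I_P|)%N by apply: max_card.
  rewrite card_ord /t; move: #|Z j| => z; case: (leqP (K - M + 1) z); intros; lia.
have hC : (0 < 'C(P, t))%N by rewrite bin_gt0 /t; lia.
have h1 : (#|B| * (M - 1) <= 'C(P, t) * (M - 1) * (M - 1))%N by rewrite leq_mul2r hB orbT.
have h2 : ('C(P, t) * (M - 1) * (M - 1) < M ^ 2 * 'C(P, t))%N.
  rewrite -mulnA mulnC ltn_pmul2r // expnS expn1.
  have hm1 : (M - 1 < M)%N by lia.
  exact: (ltn_mul hm1 hm1).
rewrite hsum -/t; lia.
Qed.
End R2.

Theorem theorem3 (R : realType) :
  (* main bound *)
  (forall M K P N : nat,
     (1 < M)%N -> (M <= K)%N -> (K <= P)%N -> (0 < N)%N ->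
     exists A : 'M[R]_(M, N),
       forall F : 'M[R]_(P, N), K_robust K F A ->
         avg_sparsity F >
           N%:R / P%:R * (P - K + M)%:R - (M ^ 2)%:R / P%:R * 'C(P, K - M + 1)%:R)
  /\
  (* asymptotic form: along any sequence of parameters with M^2 C(P,K-M+1) = o(N),
     s_bar > N/P (P-K+M) - o(N/P) *)
  (forall Ms Ks Ps Ns : nat -> nat,
     (forall n, [/\ (1 < Ms n)%N, (Ms n <= Ks n)%N, (Ks n <= Ps n)%N & (0 < Ns n)%N]) ->
     tends_to0 (fun n => (Ms n ^ 2 * 'C(Ps n, Ks n - Ms n + 1))%:R / (Ns n)%:R : R) ->
     exists e : nat -> R, tends_to0 e /\
       forall n, exists A : 'M[R]_(Ms n, Ns n),
         forall F : 'M[R]_(Ps n, Ns n), K_robust (Ks n) F A ->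
           avg_sparsity F >
             (Ns n)%:R / (Ps n)%:R * (Ps n - Ks n + Ms n)%:R
             - e n * ((Ns n)%:R / (Ps n)%:R)).
Proof.
have part1 : forall M K P N : nat,
     (1 < M)%N -> (M <= K)%N -> (K <= P)%N -> (0 < N)%N ->
     exists A : 'M[R]_(M, N),
       forall F : 'M[R]_(P, N), K_robust K F A ->
         avg_sparsity F >
           N%:R / P%:R * (P - K + M)%:R - (M ^ 2)%:R / P%:R * 'C(P, K - M + 1)%:R.
  move=> M K P N hM hMK hKP hN; exists (Vmx R M N) => F rob.
  have h := main_nat hM hMK hKP rob.
  have hP : (0 < P%:R :> R) by rewrite ltr0n; lia.
  rewrite /avg_sparsity.
  set s := (\sum_i row_sparsity F i)%N in h *.
  have hr : (N * (P - K + M))%:R < (s + M ^ 2 * 'C(P, K - M + 1))%:R :> R by rewrite ltr_nat.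
  rewrite natrD !natrM in hr.
  rewrite [N%:R / _ * _]mulrAC [_ / _ * 'C(_, _)%:R]mulrAC -mulrBl ltr_pM2r ?invr_gt0 //.
  by rewrite ltrBlDr natrX expr2.
split => //.
move=> Ms Ks Ps Ns hyp ht.
exists (fun n => (Ms n ^ 2 * 'C(Ps n, Ks n - Ms n + 1))%:R / (Ns n)%:R : R); split => //.
move=> n; case: (hyp n) => a b c d.
have [A hA] := part1 _ _ _ _ a b c d.
exists A => F rob; have := hA F rob.
have hN : (Ns n)%:R != 0 :> R by rewrite pnatr_eq0 -lt0n.
have hP : (Ps n)%:R != 0 :> R by rewrite pnatr_eq0 -lt0n; lia.
rewrite natrM.
have -> : (Ms n ^ 2)%:R * 'C(Ps n, Ks n - Ms n + 1)%:R / (Ns n)%:R * ((Ns n)%:R / (Ps n)%:R)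
   = (Ms n ^ 2)%:R / (Ps n)%:R * 'C(Ps n, Ks n - Ms n + 1)%:R :> R.
  by rewrite [in LHS]mulrA divfK // mulrAC.
by [].
Qed.
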